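(* Let $(M,d)$ and $(N,\rho)$ be complete pointed metric spaces. The set $\widehat{\mathrm{Lip}}_0(M,N):=\{\widehat f: f\in\mathrm{Lip}_0(M,N)\}$ is a closed subset of $\mathcal L(\mathcal F(M),\mathcal F(N))$ with respect to the weak operator topology; in particular it is also closed with respect to the strong operator topology.
   Context: A pointed metric space is a metric space with a distinguished point $0$. $\mathrm{Lip}_0(M,N)$ denotes the Lipschitz maps $f:M\to N$ with $f(0_M)=0_N$; $\mathrm{Lip}_0(M)=\mathrm{Lip}_0(M,\mathbb R)$ normed by the Lipschitz constant. $\delta_M:M\to\mathrm{Lip}_0(M)^*$, $\delta_M(x)(\varphi)=\varphi(x)$; $\mathcal F(M)$ is the norm-closed linear span of $\delta_M(M)$. For $f\in\mathrm{Lip}_0(M,N)$, $\widehat f:\mathcal F(M)\to\mathcal F(N)$ is the unique bounded linear operator with $\widehat f(\delta_M(x))=\delta_N(f(x))$. The weak operator topology on $\mathcal L(X,Y)$ is the topology of pointwise convergence of $T\mapsto\langle y^*,Tx\rangle$ for $x\in X$, $y^*\in Y^*$; the strong operator topology is that of pointwise norm convergence $T\mapsto Tx$. *)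

(* Defs.v *)
From Stdlib Require Import Reals Lra List.
Open Scope R_scope.


Record PMS := {
  carrier :> Type;
  dist : carrier -> carrier -> R;
  pt : carrier;
  dist_self : forall x, dist x x = 0;
  dist_sep : forall x y, dist x y = 0 -> x = y;
  dist_sym : forall x y, dist x y = dist y x;
  dist_tri : forall x y z, dist x z <= dist x y + dist y z
}.

Definition complete (M : PMS) : Prop :=
  forall u : nat -> M,
    (forall eps, 0 < eps -> exists n0, forall m n, (n0 <= m)%nat -> (n0 <= n)%nat ->
        dist M (u m) (u n) < eps) ->
    exists l : M, forall eps, 0 < eps -> exists n0, forall n, (n0 <= n)%nat ->
        dist M (u n) l < eps.

Definition lipL (M : PMS) (L : R) (phi : M -> R) : Prop :=
  phi (pt M) = 0 /\ forall x y, Rabs (phi x - phi y) <= L * dist M x y.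

Definition lip0 (M : PMS) (phi : M -> R) : Prop := exists L, lipL M L phi.

Definition lip0_map (M N : PMS) (f : M -> N) : Prop :=
  f (pt M) = pt N /\ exists L, forall x y, dist N (f x) (f y) <= L * dist M x y.

(** Functionals on Lip_0(M) (only their values on Lip_0(M) matter). *)
Definition functional (M : PMS) := (M -> R) -> R.

Definition in_dual (M : PMS) (mu : functional M) : Prop :=
  (forall phi psi a b, lip0 M phi -> lip0 M psi ->
     mu (fun x => a * phi x + b * psi x) = a * mu phi + b * mu psi) /\
  (exists C, forall phi L, 0 <= L -> lipL M L phi -> Rabs (mu phi) <= C * L).

Definition feq (M : PMS) (mu nu : functional M) : Prop :=
  forall phi, lip0 M phi -> mu phi = nu phi.

Definition normle (M : PMS) (mu : functional M) (r : R) : Prop :=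
  forall phi, lipL M 1 phi -> Rabs (mu phi) <= r.

Definition fsub (M : PMS) (mu nu : functional M) : functional M :=
  fun phi => mu phi - nu phi.
Definition flin (M : PMS) (a : R) (mu : functional M) (b : R) (nu : functional M)
  : functional M := fun phi => a * mu phi + b * nu phi.

Definition delta (M : PMS) (x : M) : functional M := fun phi => phi x.

Definition molecule (M : PMS) (l : list (R * M)) : functional M :=
  fun phi => fold_right (fun p acc => fst p * phi (snd p) + acc) 0 l.

(** mu in F(M) = norm-closed linear span of delta_M(M) in Lip_0(M)^*. *)
Definition in_free (M : PMS) (mu : functional M) : Prop :=
  in_dual M mu /\
  forall eps, 0 < eps -> exists l, normle M (fsub M mu (molecule M l)) eps.

Definition operator (M N : PMS) := functional M -> functional N.

Definition bounded_op (M N : PMS) (T : operator M N) : Prop :=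
  (forall mu, in_free M mu -> in_free N (T mu)) /\
  (forall mu nu, in_free M mu -> in_free M nu -> feq M mu nu -> feq N (T mu) (T nu)) /\
  (forall mu nu a b, in_free M mu -> in_free M nu ->
      feq N (T (flin M a mu b nu)) (flin N a (T mu) b (T nu))) /\
  (exists C, forall mu r, in_free M mu -> normle M mu r -> normle N (T mu) (C * r)).

Definition in_free_dual (N : PMS) (ys : functional N -> R) : Prop :=
  (forall nu1 nu2, in_free N nu1 -> in_free N nu2 -> feq N nu1 nu2 -> ys nu1 = ys nu2) /\
  (forall nu1 nu2 a b, in_free N nu1 -> in_free N nu2 ->
      ys (flin N a nu1 b nu2) = a * ys nu1 + b * ys nu2) /\
  (exists C, forall nu r, in_free N nu -> normle N nu r -> Rabs (ys nu) <= C * r).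

Definition in_Lip_hat (M N : PMS) (T : operator M N) : Prop :=
  bounded_op M N T /\
  exists f : M -> N, lip0_map M N f /\
    forall x, feq N (T (delta M x)) (delta N (f x)).

(** T lies in the weak-operator-topology closure of S (inside L(F(M),F(N))):
    every basic WOT neighbourhood of T meets S. *)
Definition wot_adherent (M N : PMS) (S : operator M N -> Prop) (T : operator M N) : Prop :=
  forall (l : list (functional M * (functional N -> R))) (eps : R),
    0 < eps ->
    (forall p, In p l -> in_free M (fst p) /\ in_free_dual N (snd p)) ->
    exists T', S T' /\ bounded_op M N T' /\
      forall p, In p l -> Rabs (snd p (T' (fst p)) - snd p (T (fst p))) < eps.

Definition sot_adherent (M N : PMS) (S : operator M N -> Prop) (T : operator M N) : Prop :=
  forall (l : list (functional M)) (eps : R),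
    0 < eps ->
    (forall mu, In mu l -> in_free M mu) ->
    exists T', S T' /\ bounded_op M N T' /\
      forall mu, In mu l -> normle N (fsub N (T' mu) (T mu)) eps.

(* Main.v *)
Require Import Defs.
From Stdlib Require Import Reals.
From Stdlib Require Import Lra Lia List ClassicalEpsilon.
Require Import Defs.
Import ListNotations.
Open Scope R_scope.

Lemma absP x e : Rabs x < e -> -e < x < e.
Proof. unfold Rabs; destruct (Rcase_abs x); intros; lra. Qed.
Lemma absPle x e : Rabs x <= e -> -e <= x <= e.
Proof. unfold Rabs; destruct (Rcase_abs x); intros; lra. Qed.
Lemma abs_le x e : -e <= x <= e -> Rabs x <= e.
Proof. unfold Rabs; destruct (Rcase_abs x); intros; lra. Qed.
Lemma le_eps a b : (forall d, 0 < d -> a <= b + d) -> a <= b.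
Proof. intros H. destruct (Rle_dec a b); auto. specialize (H ((a-b)/2)). lra. Qed.

Lemma dist_nonneg (N : PMS) x y : 0 <= dist N x y.
Proof. pose proof (dist_tri N x y x). rewrite dist_self, (dist_sym N y x) in H. lra. Qed.

Lemma dist_lip (N : PMS) a b z : Rabs (dist N a z - dist N b z) <= dist N a b.
Proof.
  pose proof (dist_tri N a b z). pose proof (dist_tri N b a z).
  rewrite (dist_sym N b a) in H0. apply abs_le; lra.
Qed.

Lemma lip1_lip0 (N : PMS) phi : lipL N 1 phi -> lip0 N phi.
Proof. intros H; exists 1; exact H. Qed.

Definition psi (N : PMS) (z : N) : N -> R := fun y => dist N y z - dist N (pt N) z.
Lemma psi_lip N z : lipL N 1 (psi N z).
Proof.
  split. unfold psi; ring.
  intros a b. unfold psi. replace (dist N a z - dist N (pt N) z - (dist N b z - dist N (pt N) z))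
    with (dist N a z - dist N b z) by ring. rewrite Rmult_1_l. apply dist_lip.
Qed.

Definition Approx (N : PMS) (mu : functional N) := forall phis eps, 0 < eps ->
  (forall phi, In phi phis -> lipL N 1 phi) ->
  exists y, forall phi, In phi phis -> Rabs (phi y - mu phi) < eps.

Definition rr (N : PMS) (mu : functional N) z := mu (psi N z) + dist N (pt N) z.

Lemma approx2 N mu z w eps : Approx N mu -> 0 < eps -> exists y,
  Rabs (dist N y z - rr N mu z) < eps /\ Rabs (dist N y w - rr N mu w) < eps.
Proof.
  intros H He. destruct (H [psi N z; psi N w] eps He) as [y Hy].
  { intros phi [<-|[<-|[]]]; apply psi_lip. }
  exists y. split.
  - specialize (Hy (psi N z) (or_introl eq_refl)).
    replace (dist N y z - rr N mu z) with (psi N z y - mu (psi N z)) by (unfold rr, psi; ring). exact Hy.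
  - specialize (Hy (psi N w) (or_intror (or_introl eq_refl))).
    replace (dist N y w - rr N mu w) with (psi N w y - mu (psi N w)) by (unfold rr, psi; ring). exact Hy.
Qed.

Lemma rr_tri N mu z w : Approx N mu -> dist N z w <= rr N mu z + rr N mu w.
Proof.
  intros H. apply le_eps. intros d Hd.
  destruct (approx2 N mu z w (d/2) H ltac:(lra)) as [y [H1 H2]].
  apply absP in H1; apply absP in H2.
  pose proof (dist_tri N z y w). rewrite (dist_sym N z y) in H0. lra.
Qed.

Lemma rr_lip N mu z w : Approx N mu -> rr N mu z <= rr N mu w + dist N z w.
Proof.
  intros H. apply le_eps. intros d Hd.
  destruct (approx2 N mu z w (d/2) H ltac:(lra)) as [y [H1 H2]].
  apply absP in H1; apply absP in H2.
  pose proof (dist_tri N y w z). rewrite (dist_sym N w z) in H0. lra.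
Qed.

Definition hmin (N : PMS) (pts : list N) (y : N) :=
  fold_right (fun s acc => Rmin (dist N y s) acc) (dist N y (pt N)) pts.

Lemma hmin_le N pts y s : In s (pt N :: pts) -> hmin N pts y <= dist N y s.
Proof.
  induction pts as [|a pts IH]; simpl.
  - intros [<-|[]]; lra.
  - intros [<-|[<-|Hin]].
    + eapply Rle_trans; [apply Rmin_r|]. apply IH; left; auto.
    + apply Rmin_l.
    + eapply Rle_trans; [apply Rmin_r|]. apply IH; right; auto.
Qed.

Lemma hmin_att N pts y : exists s, In s (pt N :: pts) /\ hmin N pts y = dist N y s.
Proof.
  induction pts as [|a pts IH]; simpl.
  - exists (pt N); auto.
  - unfold Rmin. destruct (Rle_dec (dist N y a) (hmin N pts y)).
    + exists a; simpl; auto.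
    + destruct IH as [s [Hs Hs2]]; exists s; split; [destruct Hs; simpl; auto | auto].
Qed.

Lemma hmin_nonneg N pts y : 0 <= hmin N pts y.
Proof. destruct (hmin_att N pts y) as [s [_ ->]]. apply dist_nonneg. Qed.

Lemma Rmin_lip p p' q q' e : Rabs (p - q) <= e -> Rabs (p' - q') <= e ->
  Rabs (Rmin p p' - Rmin q q') <= e.
Proof.
  intros H1 H2; apply absPle in H1; apply absPle in H2. apply abs_le.
  unfold Rmin; destruct (Rle_dec p p'); destruct (Rle_dec q q'); lra.
Qed.

Lemma hmin_lipL N pts : lipL N 1 (hmin N pts).
Proof.
  split.
  - pose proof (hmin_nonneg N pts (pt N)). pose proof (hmin_le N pts (pt N) (pt N) (or_introl eq_refl)).
    rewrite dist_self in H0. lra.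
  - intros a b. rewrite Rmult_1_l. induction pts as [|c pts IH]; simpl.
    + apply dist_lip.
    + apply Rmin_lip; auto. apply dist_lip.
Qed.

Lemma molecule_zero N pts l : (forall p, In p l -> hmin N pts (snd p) = 0) ->
  molecule N l (hmin N pts) = 0.
Proof.
  induction l as [|p l IH]; intros H; unfold molecule; simpl. reflexivity.
  rewrite (H p (or_introl eq_refl)). unfold molecule in IH. rewrite IH. ring.
  intros q Hq; apply H; right; auto.
Qed.

Lemma small_rr N mu eps : in_free N mu -> Approx N mu -> 0 < eps -> exists z, rr N mu z < eps.
Proof.
  intros Hf Ha He. destruct (proj2 Hf (eps/3) ltac:(lra)) as [l Hl].
  set (pts := map snd l). set (h := hmin N pts).
  pose proof (Hl h (hmin_lipL N pts)) as Hh. unfold fsub, h in Hh.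
  rewrite molecule_zero in Hh.
  2:{ intros p Hp. pose proof (hmin_nonneg N pts (snd p)).
      pose proof (hmin_le N pts (snd p) (snd p) (or_intror (in_map snd l p Hp))).
      rewrite dist_self in H0. lra. }
  rewrite Rminus_0_r in Hh. apply absPle in Hh.
  destruct (Ha (h :: map (psi N) (pt N :: pts)) (eps/3) ltac:(lra)) as [y Hy].
  { intros phi [<-|Hin]. apply hmin_lipL. apply in_map_iff in Hin.
    destruct Hin as [z [<- _]]. apply psi_lip. }
  destruct (hmin_att N pts y) as [s [Hs Hs2]].
  pose proof (Hy h (or_introl eq_refl)) as H1.
  pose proof (Hy (psi N s) (or_intror (in_map _ _ _ Hs))) as H2.
  apply absP in H1; apply absP in H2. exists s. unfold rr. replace (psi N s y) with (dist N y s - dist N (pt N) s) in H2 by reflexivity.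
  unfold h in *. lra.
Qed.

Lemma root_rr N mu : complete N -> in_free N mu -> Approx N mu -> exists y, rr N mu y = 0.
Proof.
  intros hN Hf Ha.
  assert (H : forall n : nat, exists z, rr N mu z < / INR (S n)).
  { intro n. apply small_rr; auto. apply Rinv_0_lt_compat, lt_0_INR; lia. }
  set (u := fun n => proj1_sig (constructive_indefinite_description _ (H n))).
  assert (Hu : forall n, rr N mu (u n) < / INR (S n)).
  { intro n. unfold u. destruct (constructive_indefinite_description _ (H n)); auto. }
  assert (Hsm : forall e, 0 < e -> exists N0, forall m, (N0 <= m)%nat -> / INR (S m) < e).
  { intros e He. destruct (archimed_cor1 e He) as [N0 [H1 H2]]. exists N0. intros m Hm.
    eapply Rle_lt_trans; [|exact H1]. apply Rinv_le_contravar. apply lt_0_INR; auto.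
    apply le_INR; lia. }
  destruct (hN u) as [y Hy].
  { intros e He. destruct (Hsm (e/2) ltac:(lra)) as [N0 HN0]. exists N0. intros m n Hm Hn.
    pose proof (rr_tri N mu (u m) (u n) Ha). pose proof (Hu m). pose proof (Hu n).
    pose proof (HN0 m Hm). pose proof (HN0 n Hn). lra. }
  exists y. apply Rle_antisym.
  - apply le_eps. intros d Hd. destruct (Hy (d/2) ltac:(lra)) as [n1 Hn1].
    destruct (Hsm (d/2) ltac:(lra)) as [N0 HN0].
    set (n := Nat.max n1 N0).
    pose proof (Hn1 n (Nat.le_max_l _ _)). pose proof (HN0 n (Nat.le_max_r _ _)).
    pose proof (Hu n). pose proof (rr_lip N mu y (u n) Ha).
    rewrite (dist_sym N y (u n)) in H3. lra.
  - pose proof (rr_tri N mu y y Ha). rewrite dist_self in H0. lra.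
Qed.

Lemma at_root N mu y : Approx N mu -> rr N mu y = 0 -> forall phi, lipL N 1 phi -> mu phi = phi y.
Proof.
  intros Ha Hr phi Hphi.
  assert (Rabs (mu phi - phi y) <= 0).
  { apply le_eps. intros d Hd.
    destruct (Ha [phi; psi N y] (d/2) ltac:(lra)) as [y' Hy'].
    { intros f [<-|[<-|[]]]; auto. apply psi_lip. }
    pose proof (Hy' phi (or_introl eq_refl)) as H1.
    pose proof (Hy' (psi N y) (or_intror (or_introl eq_refl))) as H2.
    apply absP in H1; apply absP in H2. replace (psi N y y') with (dist N y' y - dist N (pt N) y) in H2 by reflexivity. unfold rr in Hr.
    pose proof (proj2 Hphi y' y) as H3. apply absPle in H3.
    apply abs_le. lra. }
  apply absPle in H. lra.
Qed.

Lemma mu_is_delta N mu : complete N -> in_free N mu -> Approx N mu ->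
  exists y, feq N mu (delta N y).
Proof.
  intros hN Hf Ha. destruct (root_rr N mu hN Hf Ha) as [y Hy]. exists y.
  intros phi [L [H0 Hl]]. unfold delta.
  set (K := Rabs L + 1).
  assert (HK : 0 < K) by (unfold K; pose proof (Rabs_pos L); lra).
  assert (HlK : forall a b, Rabs (phi a - phi b) <= K * dist N a b).
  { intros a b. eapply Rle_trans; [apply Hl|]. apply Rmult_le_compat_r.
    apply dist_nonneg. unfold K; pose proof (Rle_abs L); lra. }
  set (ps := fun z => / K * phi z + 0 * phi z).
  assert (Hps : lipL N 1 ps).
  { split. unfold ps; rewrite H0; ring.
    intros a b. unfold ps. replace (/ K * phi a + 0 * phi a - (/ K * phi b + 0 * phi b))
      with (/ K * (phi a - phi b)) by ring.
    rewrite Rabs_mult, (Rabs_pos_eq (/K)) by (left; apply Rinv_0_lt_compat; auto).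
    replace (1 * dist N a b) with (/ K * (K * dist N a b)) by (field; lra).
    apply Rmult_le_compat_l. left; apply Rinv_0_lt_compat; auto. auto. }
  pose proof (at_root N mu y Ha Hy ps Hps) as E.
  assert (Hl0 : lip0 N phi) by (exists L; split; auto).
  pose proof (proj1 (proj1 Hf) phi phi (/K) 0 Hl0 Hl0) as Lin.
  unfold ps in E. rewrite Lin in E.
  apply Rmult_eq_reg_l with (/K). lra. apply Rinv_neq_0_compat; lra.
Qed.

Lemma delta_free (M : PMS) x : in_free M (delta M x).
Proof.
  split. split.
  - intros; unfold delta; reflexivity.
  - exists (dist M x (pt M)). intros phi L HL [H0 Hl]. specialize (Hl x (pt M)).
    rewrite H0, Rminus_0_r in Hl. unfold delta. rewrite Rmult_comm. exact Hl.
  - intros eps He. exists [(1, x)]. intros phi _. unfold fsub, molecule, delta; simpl.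
    replace (phi x - (1 * phi x + 0)) with 0 by ring. rewrite Rabs_R0; lra.
Qed.

Lemma diff_free (M : PMS) x x' : in_free M (flin M 1 (delta M x) (-1) (delta M x')).
Proof.
  split. split.
  - intros; unfold flin, delta; ring.
  - exists (dist M x x'). intros phi L HL [H0 Hl]. specialize (Hl x x').
    unfold flin, delta. replace (1 * phi x + -1 * phi x') with (phi x - phi x') by ring.
    rewrite Rmult_comm. exact Hl.
  - intros eps He. exists [(1, x); (-1, x')]. intros phi _. unfold fsub, flin, molecule, delta; simpl.
    replace (1 * phi x + -1 * phi x' - (1 * phi x + (-1 * phi x' + 0))) with 0 by ring.
    rewrite Rabs_R0; lra.
Qed.

Lemma dual_eval (N : PMS) phi : lipL N 1 phi -> in_free_dual N (fun nu => nu phi).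
Proof.
  intros H. split; [|split].
  - intros nu1 nu2 _ _ Heq. apply Heq. apply lip1_lip0; auto.
  - intros; unfold flin; reflexivity.
  - exists 1. intros nu r _ Hn. rewrite Rmult_1_l. apply Hn; auto.
Qed.

Lemma wot_approx M N T : wot_adherent M N (in_Lip_hat M N) T -> forall x, Approx N (T (delta M x)).
Proof.
  intros H x phis eps He Hphis.
  destruct (H (map (fun phi => (delta M x, fun nu : functional N => nu phi)) phis) eps He)
    as [T' [[_ [f' [_ Hf']]] [_ HT']]].
  { intros p Hp. apply in_map_iff in Hp. destruct Hp as [phi [<- Hin]]. simpl.
    split; [apply delta_free | apply dual_eval; auto]. }
  exists (f' x). intros phi Hin.
  specialize (HT' _ (in_map (fun phi => (delta M x, fun nu : functional N => nu phi)) _ _ Hin)).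
  simpl in HT'. rewrite (Hf' x phi (lip1_lip0 _ _ (Hphis _ Hin))) in HT'. exact HT'.
Qed.

Lemma sot_approx M N T : sot_adherent M N (in_Lip_hat M N) T -> forall x, Approx N (T (delta M x)).
Proof.
  intros H x phis eps He Hphis.
  destruct (H [delta M x] (eps/2) ltac:(lra)) as [T' [[_ [f' [_ Hf']]] [_ HT']]].
  { intros mu [<-|[]]. apply delta_free. }
  exists (f' x). intros phi Hin.
  specialize (HT' _ (or_introl eq_refl) phi (Hphis _ Hin)). unfold fsub in HT'.
  rewrite (Hf' x phi (lip1_lip0 _ _ (Hphis _ Hin))) in HT'. unfold delta in HT'.
  unfold delta. lra.
Qed.

Lemma build M N T : complete N -> bounded_op M N T -> (forall x, Approx N (T (delta M x))) ->
  in_Lip_hat M N T.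
Proof.
  intros hN HT Happ.
  assert (Hex : forall x, exists y, feq N (T (delta M x)) (delta N y)).
  { intro x. apply mu_is_delta; auto. apply (proj1 HT). apply delta_free. }
  set (f := fun x => proj1_sig (constructive_indefinite_description _ (Hex x))).
  assert (Hf : forall x, feq N (T (delta M x)) (delta N (f x))).
  { intro x. unfold f. destruct (constructive_indefinite_description _ (Hex x)); auto. }
  split; [exact HT|]. exists f. split; [|exact Hf].
  destruct HT as [Hfr [Hfeq [Hlin [C HC]]]].
  split.
  - assert (Hn : normle M (delta M (pt M)) 0).
    { intros phi [H0 _]. unfold delta. rewrite H0, Rabs_R0. lra. }
    pose proof (HC _ _ (delta_free M (pt M)) Hn) as Hn2.
    set (phi := fun z => dist N z (pt N)).
    assert (Hp : lipL N 1 phi).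
    { split. unfold phi; apply dist_self. intros a b. rewrite Rmult_1_l. apply dist_lip. }
    specialize (Hn2 phi Hp). rewrite (Hf (pt M) phi (lip1_lip0 _ _ Hp)) in Hn2.
    unfold delta, phi in Hn2. apply dist_sep. apply absPle in Hn2.
    pose proof (dist_nonneg N (f (pt M)) (pt N)). lra.
  - exists C. intros x x'.
    assert (Hn : normle M (flin M 1 (delta M x) (-1) (delta M x')) (dist M x x')).
    { intros phi [H0 Hl]. unfold flin, delta.
      replace (1 * phi x + -1 * phi x') with (phi x - phi x') by ring.
      specialize (Hl x x'). rewrite Rmult_1_l in Hl. exact Hl. }
    pose proof (HC _ _ (diff_free M x x') Hn) as Hn2.
    specialize (Hn2 (psi N (f x')) (psi_lip N (f x'))).
    rewrite (Hlin _ _ 1 (-1) (delta_free M x) (delta_free M x') _ (lip1_lip0 _ _ (psi_lip N (f x')))) in Hn2.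
    unfold flin in Hn2.
    rewrite (Hf x _ (lip1_lip0 _ _ (psi_lip N (f x')))) in Hn2.
    rewrite (Hf x' _ (lip1_lip0 _ _ (psi_lip N (f x')))) in Hn2.
    unfold delta, psi in Hn2. rewrite dist_self in Hn2.
    replace (1 * (dist N (f x) (f x') - dist N (pt N) (f x')) + -1 * (0 - dist N (pt N) (f x')))
      with (dist N (f x) (f x')) in Hn2 by ring.
    rewrite Rabs_pos_eq in Hn2 by apply dist_nonneg. exact Hn2.
Qed.

Theorem corollary6p4 (M N : PMS) (hM : complete M) (hN : complete N) :
  (forall T : operator M N, bounded_op M N T ->
     wot_adherent M N (in_Lip_hat M N) T -> in_Lip_hat M N T) /\
  (forall T : operator M N, bounded_op M N T ->
     sot_adherent M N (in_Lip_hat M N) T -> in_Lip_hat M N T).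
Proof.
  split; intros T HT Had; apply build; auto.
  - apply wot_approx; auto.
  - apply sot_approx; auto.
Qed.
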